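(* Let a project have finite state space $\mathbb{X}$, transition probabilities $p(i,j)$, discount factor $0<\beta\le1$ and horizon $T$. For a tuple $A=(A_1,\dots,A_T)$ of subsets of $\mathbb{X}$ and $1\le d\le T$, $i\in\mathbb{X}$, let $g_d^A(i)=\mathsf{E}_i[\sum_{t=0}^{\tau-1}\beta^t]$ be the expected total discounted time the project is engaged starting in state $i$ with $d$ remaining periods under the stopping rule $\tau$ that, at time $t<d$ engages the project iff $X(t)\in A_{d-t}$, and stops at the first time this fails or when $t=d$; and let $w_d^A(i)=g_d^{A\cup\{(d,i)\}}(i)$, where $A\cup\{(s,j)\}$ denotes the tuple obtained from $A$ by replacing $A_s$ with $A_s\cup\{j\}$. Let $A$ satisfy $A_1\subseteq\dots\subseteq A_T\subseteq\mathbb{X}$. Then for $1\le d\le T$, $i\in\mathbb{X}$: (a) $w_d^A(i)=1+\beta\sum_{j\in A_{d-1}}p(i,j)w_{d-1}^A(j)$ if $d\ge2$, and $w_1^A(i)=1$. (b) $w_d^{A\cup\{(d,i^* )\}}(i)=w_d^A(i)$ for $i^*\in\mathbb{X}\setminus A_d$. (c) $w_d^{A\cup\{(d-1,i^* )\}}(i)=w_d^A(i)+\beta p(i,i^* )w_{d-1}^A(i^* )$ for $i^*\in A_d\setminus A_{d-1}$ (with $d\ge2$). (d) $w_d^{A\cup\{(s,i^* )\}}(i)=1+\beta\sum_{j\in A_{d-1}}p(i,j)w_{d-1}^{A\cup\{(s,i^* )\}}(j)$ for $1\le s\le d-2$ and $i^*\in A_{s+1}\setminus A_s$.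
   Context: $w_d^A(i)$ is the modified work measure: the work measure of the stopping rule with continuation sets $A$, modified so that the project is engaged at least at time 0 in state $i$ with $d$ periods remaining. *)

(* Defs.v *)
From HB Require Import structures.
From mathcomp Require Import all_boot all_order all_algebra.
Set Implicit Arguments. Unset Strict Implicit. Unset Printing Implicit Defensive.
Import Order.TTheory GRing.Theory Num.Theory.
Local Open Scope ring_scope.

(* A tuple A = (A_1, ..., A_T) of subsets of the finite state space X is
   represented as a function A : nat -> {set X}; only indices 1..T are used. *)

Definition addAt (X : finType) (A : nat -> {set X}) (s : nat) (j : X) : nat -> {set X} :=
  fun k => if k == s then j |: A k else A k.

(* A trajectory (X(0), ..., X(d-1)) is a d-tuple; x_t = nth i x t. *)
Definition path_prob (R : pzRingType) (X : finType) (p : X -> X -> R)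
  (d : nat) (i : X) (x : d.-tuple X) : R :=
  (nth i x 0 == i)%:R * \prod_(1 <= t < d) p (nth i x t.-1) (nth i x t).

Definition stop_time (X : finType) (A : nat -> {set X}) (d : nat) (i : X)
  (x : d.-tuple X) : nat :=
  \big[minn/d]_(t < d | nth i x t \notin A (d - t)%N) t.

Definition g (R : pzRingType) (X : finType) (p : X -> X -> R) (beta : R)
  (d : nat) (A : nat -> {set X}) (i : X) : R :=
  \sum_(x : d.-tuple X) path_prob p i x * \sum_(t < stop_time A i x) beta ^+ t.

Definition w (R : pzRingType) (X : finType) (p : X -> X -> R) (beta : R)
  (d : nat) (A : nat -> {set X}) (i : X) : R :=
  g p beta d (addAt A d i) i.

(* Main.v *)
Require Import Defs.
From HB Require Import structures.
From mathcomp Require Import all_boot all_order all_algebra.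
From mathcomp Require Import ring zify.
Import Order.TTheory GRing.Theory Num.Theory.
Local Open Scope ring_scope.

Lemma minn_shift n (P : nat -> bool) : \big[minn/n.+1]_(t < n.+1 | P t) t = if P 0%N then 0%N else (\big[minn/n]_(t < n | P t.+1) t).+1.
Proof.
rewrite -(@big_mkord _ n.+1 minn n.+1 P id) -(@big_mkord _ n minn n (fun t => P t.+1) id).
rewrite big_ltn_cond // big_add1 /= min0n.
case: (P 0%N) => //.
by rewrite (big_morph succn (id1 := n.+1) (op1 := minn) (fun x y => esym (minnSS x y))).
Qed.

Section S.
Variables (R : realFieldType) (X : finType) (p : X -> X -> R) (beta : R).
Hypothesis stoch : forall i, \sum_(j : X) p i j = 1.

Lemma nthD n (y : n.-tuple X) a b t : (t < n)%N -> nth a y t = nth b y t.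
Proof. by move=> lt; apply: set_nth_default; rewrite size_tuple. Qed.
Arguments nthD {n}.

Lemma tuple_sum d (F : (d.+1).-tuple X -> R) :
  \sum_(x : (d.+1).-tuple X) F x = \sum_(x0 : X) \sum_(y : d.-tuple X) F (cons_tuple x0 y).
Proof.
rewrite pair_big /=.
rewrite (reindex (fun u : X * d.-tuple X => cons_tuple u.1 u.2)) //=.
exists (fun x : (d.+1).-tuple X => (thead x, behead_tuple x)) => [[a y] _|x _] /=.
  by congr pair; apply: val_inj.
by apply: val_inj; case: x => [[|a s] //].
Qed.

Lemma sum_pick (G : X -> R) i : \sum_(x : X) (x == i)%:R * G x = G i.
Proof.
rewrite (bigD1 i) //= eqxx mul1r big1 ?addr0 // => x /negbTE ->; by rewrite mul0r.
Qed.

Lemma pp_cons d x0 (y : d.-tuple X) i :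
  path_prob p i (cons_tuple x0 y) = (x0 == i)%:R * \sum_j p x0 j * path_prob p j y.
Proof.
rewrite /path_prob /=; congr (_ * _).
case: d y => [|d] y.
  rewrite big_geq // -{1}(stoch x0); apply: eq_bigr => j _.
  by rewrite nth_default ?size_tuple // eqxx mul1r big_geq ?mulr1.
rewrite big_ltn // big_add1 /=.
rewrite [RHS](bigD1 (nth i y 0)) //= [X in _ = _ + X]big1 ?addr0; last first.
  move=> j /negbTE Hj; by rewrite (nthD y j i 0) // eq_sym Hj mul0r mulr0.
rewrite (nthD y (nth i y 0) i 0) // eqxx mul1r; congr (_ * _).
rewrite !big_nat; apply: eq_bigr => t /andP[t1 td].
case: t t1 td => // t _ td /=.
by rewrite (nthD y i (nth i y 0)) ?(nthD y i (nth i y 0) t.+1) // (ltn_trans _ td).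
Qed.

Lemma pp_sum d j : \sum_(y : d.-tuple X) path_prob p j y = 1.
Proof.
elim: d j => [|d IH] j.
  rewrite (eq_bigr (fun _ => 1)) ?sumr_const ?card_tuple ?expn0 // => y _.
  by rewrite /path_prob nth_default ?size_tuple // eqxx mul1r big_geq.
rewrite tuple_sum (eq_bigr (fun x0 => (x0 == j)%:R * 1)).
  by rewrite sum_pick.
move=> x0 _; rewrite (eq_bigr (fun y => (x0 == j)%:R * \sum_k p x0 k * path_prob p k y)); last by move=> y _; rewrite pp_cons.
rewrite -big_distrr /=; congr (_ * _).
rewrite exchange_big /= -(stoch x0); apply: eq_bigr => k _.
by rewrite -big_distrr /= IH mulr1.
Qed.

Lemma stop_def d B (y : d.-tuple X) a b : stop_time B a y = stop_time B b y.
Proof. by rewrite /stop_time; apply: eq_bigl => t; rewrite (nthD y a b). Qed.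

Lemma stop_cons d B i x0 (y : d.-tuple X) :
  stop_time B i (cons_tuple x0 y) = if x0 \in B d.+1 then (stop_time B i y).+1 else 0%N.
Proof.
rewrite /stop_time /= (minn_shift d (fun t => nth i (x0::y) t \notin B (d.+1 - t)%N)) /= subn0.
by case: (x0 \in B d.+1).
Qed.

Lemma S_succ n : \sum_(t < n.+1) beta ^+ t = 1 + beta * \sum_(t < n) beta ^+ t.
Proof. by rewrite big_ord_recl expr0 big_distrr; congr (_ + _); apply: eq_bigr => t _; rewrite exprS. Qed.

Lemma g_cons B d i : g p beta d.+1 B i = (i \in B d.+1)%:R * (1 + beta * \sum_j p i j * g p beta d B j).
Proof.
rewrite /g tuple_sum.
rewrite (eq_bigr (fun x0 => (x0 == i)%:R * \sum_(y : d.-tuple X) (\sum_j p x0 j * path_prob p j y) * \sum_(t < stop_time B i (cons_tuple x0 y)) beta ^+ t)); last first.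
  by move=> x0 _; rewrite big_distrr /=; apply: eq_bigr => y _; rewrite pp_cons mulrA.
rewrite sum_pick.
case: (boolP (i \in B d.+1)) => Hi; last first.
  rewrite mul0r big1 // => y _; by rewrite stop_cons (negbTE Hi) big_ord0 mulr0.
rewrite mul1r.
under eq_bigr => y _ do rewrite stop_cons Hi S_succ big_distrl /=.
rewrite exchange_big /=.
transitivity (\sum_j p i j * (1 + beta * \sum_(y : d.-tuple X) path_prob p j y * \sum_(t < stop_time B j y) beta ^+ t)).
  apply: eq_bigr => j _.
  rewrite (eq_bigr (fun y => p i j * (path_prob p j y + beta * (path_prob p j y * \sum_(t < stop_time B j y) beta ^+ t)))); last first.
    by move=> y _; rewrite (stop_def _ _ y i j); ring.
  by rewrite -big_distrr big_split /= -big_distrr pp_sum.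
symmetry; rewrite big_distrr -{1}(stoch i) -big_split /=; apply: eq_bigr => j _; ring.
Qed.

Lemma g_loc d A C i : (forall k, (0 < k <= d)%N -> A k = C k) ->
  g p beta d A i = g p beta d C i.
Proof.
move=> H; rewrite /g; apply: eq_bigr => x _; congr (_ * _).
suff -> : stop_time A i x = stop_time C i x by [].
rewrite /stop_time; apply: eq_bigl => t; rewrite H //.
have := ltn_ord t; lia.
Qed.

Lemma g0 A i : g p beta 0 A i = 0.
Proof. by rewrite /g big1 // => x _; rewrite /stop_time !big_ord0 mulr0. Qed.

Lemma w_rec d A i : w p beta d.+1 A i = 1 + beta * \sum_j p i j * g p beta d A j.
Proof.
rewrite /w g_cons.
have -> : (i \in addAt A d.+1 i d.+1) = true by rewrite /addAt eqxx setU11.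
rewrite mul1r; congr (1 + beta * _); apply: eq_bigr => j _; congr (_ * _).
apply: g_loc => k /andP[_ kd]; rewrite /addAt ifN //; lia.
Qed.

Lemma g_w d A j : (0 < d)%N -> g p beta d A j = (j \in A d)%:R * w p beta d A j.
Proof. by case: d => // d _; rewrite g_cons w_rec. Qed.

Lemma w_rec2 d A i : (0 < d)%N ->
  w p beta d.+1 A i = 1 + beta * \sum_(j in A d) p i j * w p beta d A j.
Proof.
move=> d0; rewrite w_rec [X in _ = _ + _ * X]big_mkcond /=; congr (1 + beta * _); apply: eq_bigr => j _.
by rewrite g_w //; case: (j \in A d); rewrite ?mul1r ?mul0r ?mulr0.
Qed.

Lemma w_loc d A C i : (forall k, (0 < k < d)%N -> A k = C k) -> w p beta d A i = w p beta d C i.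
Proof.
case: d => [|d] H; first by rewrite /w !g0.
rewrite !w_rec; congr (1 + beta * _); apply: eq_bigr => j _; congr (_ * _).
by apply: g_loc => k kd; apply: H.
Qed.

Lemma w1 A i : w p beta 1 A i = 1.
Proof. by rewrite w_rec big1 ?mulr0 ?addr0 // => j _; rewrite g0 mulr0. Qed.

End S.

Theorem lemma2 (R : realFieldType) (X : finType) (p : X -> X -> R) (beta : R)
  (T : nat) (A : nat -> {set X}) :
  (forall i j, 0 <= p i j) ->
  (forall i, \sum_(j : X) p i j = 1) ->
  0 < beta <= 1 ->
  (forall k, (1 <= k < T)%N -> A k \subset A k.+1) ->
  forall (d : nat) (i : X), (1 <= d <= T)%N ->
  [/\ (2 <= d)%N ->
        w p beta d A i = 1 + beta * \sum_(j in A d.-1) p i j * w p beta d.-1 A j,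
      d = 1%N -> w p beta d A i = 1,
      forall istar, istar \notin A d ->
        w p beta d (addAt A d istar) i = w p beta d A i,
      (2 <= d)%N -> forall istar, istar \in A d :\: A d.-1 ->
        w p beta d (addAt A d.-1 istar) i
          = w p beta d A i + beta * p i istar * w p beta d.-1 A istar
    & forall s istar, (1 <= s)%N -> (s <= d - 2)%N -> istar \in A s.+1 :\: A s ->
        w p beta d (addAt A s istar) i
          = 1 + beta * \sum_(j in A d.-1) p i j * w p beta d.-1 (addAt A s istar) j].
Proof.
move=> p0 stoch hb hA d i /andP[d1 dT]; split.
- move=> d2; case: d d1 dT d2 => [|[|d]] //= _ _ _; exact: (@w_rec2 _ _ p beta stoch).
- by move=> ->; exact: (@w1 _ _ p beta stoch).
- by move=> istar _; apply: (@w_loc _ _ p beta stoch) => k /andP[_ kd]; rewrite /addAt ifN //; lia.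
- move=> d2 istar; case: d d1 dT d2 => [|[|d]] //= _ _ _ /setDP[_ Hn].
  have W : forall j, w p beta d.+1 (addAt A d.+1 istar) j = w p beta d.+1 A j.
    by move=> j; apply: (@w_loc _ _ p beta stoch) => k /andP[_ kd]; rewrite /addAt ifN //; lia.
  have E : addAt A d.+1 istar d.+1 = istar |: A d.+1 by rewrite /addAt eqxx.
  rewrite [LHS](@w_rec2 _ _ p beta stoch) // [w p beta d.+2 A i](@w_rec2 _ _ p beta stoch) // E big_setU1 //= W.
  under eq_bigr => j _ do rewrite W.
  ring.
- move=> s istar s1; case: d d1 dT => [|[|d]] //= _ _ sd _; first by lia.
  have E : addAt A s istar d.+1 = A d.+1 by rewrite /addAt ifN //; lia.
  by rewrite (@w_rec2 _ _ p beta stoch) // E.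
Qed.
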